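(* Let $G$ be a connected graph obtained by point-attaching from pairwise disjoint connected graphs $G_1,\dots,G_k$. Then $\chi_{dom}(G)\le \chi_{dom}(G_1)+\chi_{dom}(G_2)+\cdots+\chi_{dom}(G_k)$.
   Context: All graphs are finite and simple. A dominated coloring of a graph is a proper coloring in which every color class is dominated by at least one vertex, i.e. for each color class $C$ there is a vertex adjacent to every vertex of $C$; $\chi_{dom}$ denotes the minimum number of colors in a dominated coloring. Point-attaching: given pairwise disjoint connected graphs $G_1,\dots,G_k$, select a vertex of $G_1$ and a vertex of $G_2$ and identify them; then continue inductively, each time identifying a vertex of the graph built so far with a vertex of the next $G_i$. The resulting connected graph is said to be obtained by point-attaching from $G_1,\dots,G_k$. *)

(* Defs.v *)
From mathcomp Require Import all_boot.
Set Implicit Arguments. Unset Strict Implicit. Unset Printing Implicit Defensive.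

Record sgraph : Type := SGraph {
  svert : finType;
  sadj : rel svert;
  sadj_sym : symmetric sadj;
  sadj_irr : irreflexive sadj }.

Definition connected (G : sgraph) : bool :=
  (0 < #|svert G|) && [forall u, forall v, connect (@sadj G) u v].

Definition dom_coloring (G : sgraph) (k : nat) (f : {ffun svert G -> 'I_k}) : bool :=
  [forall u, forall v, sadj u v ==> (f u != f v)] &&
  [forall i : 'I_k, exists w, forall u, (f u == i) ==> sadj w u].

Definition has_dom_coloring (G : sgraph) (k : nat) : bool :=
  [exists f : {ffun svert G -> 'I_k}, dom_coloring f].

(* chi_dom G : the least k such that G has a dominated coloring with k colors.
   (If G has a dominated coloring at all, it has one with at most #|V| colors,
   so searching k in 0..#|V| suffices; the value is only meaningful when G
   admits a dominated coloring.) *)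
Definition chi_dom (G : sgraph) : nat :=
  find (has_dom_coloring G) (iota 0 #|svert G|.+1).

(* One point-attaching step: identify vertex x of H with vertex y of G.
   Vertices: those of H, plus those of G other than y. *)
Section Attach.
Variables (H G : sgraph) (x : svert H) (y : svert G).

Definition att_vert : finType := (svert H + {v : svert G | v != y})%type.

Definition att_adj : rel att_vert := fun a b =>
  match a, b with
  | inl a, inl b => sadj a b
  | inr a, inr b => sadj (val a) (val b)
  | inl a, inr b => (a == x) && sadj y (val b)
  | inr a, inl b => (b == x) && sadj (val a) y
  end.

Lemma att_adj_sym : symmetric att_adj.
Proof.
move=> [a|a] [b|b] /=.
- exact: sadj_sym.
- by rewrite [sadj y _]sadj_sym.
- by rewrite [sadj _ y]sadj_sym.
- exact: sadj_sym.
Qed.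

Lemma att_adj_irr : irreflexive att_adj.
Proof. by move=> [a|a] /=; apply: sadj_irr. Qed.

Definition attach : sgraph := SGraph att_adj_sym att_adj_irr.
End Attach.

(* point_attached G Gs : G is obtained by point-attaching from the graphs
   Gs = [:: G_1; ...; G_k] (in this order), the G_i being taken pairwise
   disjoint (disjoint union is built into [attach]). *)
Inductive point_attached : sgraph -> seq sgraph -> Prop :=
  | pa_base (G1 : sgraph) : point_attached G1 [:: G1]
  | pa_step (H : sgraph) (Gs : seq sgraph) (G : sgraph)
      (x : svert H) (y : svert G) :
      point_attached H Gs -> point_attached (attach x y) (rcons Gs G).

(* Main.v *)
Require Import Defs.
From mathcomp Require Import all_boot.

Lemma chi_dom_le (G : sgraph) k : has_dom_coloring G k -> chi_dom G <= k.
Proof.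
move=> Hk; rewrite /chi_dom.
case: (leqP k #|svert G|) => hk.
- rewrite leqNgt; apply/negP => /(before_find 0).
  by rewrite nth_iota ?ltnS // add0n Hk.
- by apply: leq_trans (find_size _ _) _; rewrite size_iota.
Qed.

Lemma has_dom_chi (G : sgraph) k : has_dom_coloring G k ->
  has_dom_coloring G (chi_dom G).
Proof.
move=> /existsP [f /andP [_ /forallP Hd]].
have nb : forall v : svert G, exists w, sadj w v.
  move=> v; have /existsP [w /forallP Hw] := Hd (f v).
  by exists w; have := Hw v; rewrite eqxx.
have Hn : has_dom_coloring G #|svert G|.
  apply/existsP; exists [ffun v => enum_rank v]; apply/andP; split.
    apply/forallP => u; apply/forallP => v; apply/implyP => huv.
    rewrite !ffunE; apply/negP => /eqP /enum_rank_inj e.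
    by move: huv; rewrite e sadj_irr.
  apply/forallP => i; have [w hw] := nb (enum_val i).
  apply/existsP; exists w; apply/forallP => u; apply/implyP.
  by rewrite ffunE => /eqP e; rewrite -(enum_rankK u) e.
have hh : has (has_dom_coloring G) (iota 0 #|svert G|.+1).
  apply/hasP; exists #|svert G|; last exact: Hn.
  by rewrite mem_iota add0n ltnS leqnn.
have := nth_find 0 hh; rewrite nth_iota //.
by rewrite -[X in _ < X](size_iota 0) -has_find.
Qed.

Lemma attach_col (H G : sgraph) (x : svert H) (y : svert G) a b :
  has_dom_coloring H a -> has_dom_coloring G b ->
  has_dom_coloring (attach x y) (a + b).
Proof.
move=> /existsP [fH /andP [/forallP pH /forallP dH]].
move=> /existsP [fG /andP [/forallP pG /forallP dG]].
apply/existsP.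
exists [ffun v : svert (attach x y) => match v with
   | inl h => lshift b (fH h) | inr g => rshift a (fG (val g)) end].
apply/andP; split.
  apply/forallP => -[u|u]; apply/forallP => -[v|v]; apply/implyP => /= huv;
    rewrite !ffunE ?eq_lrshift ?eq_rlshift //.
  - by rewrite eq_lshift; have /forallP/(_ v)/implyP := pH u; apply.
  - by rewrite eq_rshift; have /forallP/(_ (val v))/implyP := pG (val u); apply.
apply/forallP => i; case: (split_ordP i) => j -> {i}.
- have /existsP [w /forallP hw] := dH j.
  apply/existsP; exists (inl w); apply/forallP => -[u|u]; rewrite ffunE.
    by rewrite eq_lshift; exact: hw.
  by rewrite eq_rlshift.
- have /existsP [w /forallP hw] := dG j.
  case: (eqVneq w y) => [ewy | nwy].
    apply/existsP; exists (inl x); apply/forallP => -[u|u]; rewrite ffunE.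
      by rewrite eq_lrshift.
    rewrite eq_rshift /= eqxx /=; have := hw (val u); by rewrite ewy.
  apply/existsP; exists (inr (exist _ w nwy)); apply/forallP => -[u|u]; rewrite ffunE.
    by rewrite eq_lrshift.
  rewrite eq_rshift /=; exact: hw.
Qed.

Lemma main_aux (G : sgraph) (Gs : seq sgraph) :
  point_attached G Gs ->
  (forall i, i < size Gs -> exists k, has_dom_coloring (nth G Gs i) k) ->
  has_dom_coloring G (\sum_(Gi <- Gs) chi_dom Gi).
Proof.
elim=> [G1 | H Gs' G' x y pa IH] hyp.
  rewrite big_seq1; have [k hk] := hyp 0 isT; exact: has_dom_chi hk.
rewrite big_rcons /=; apply: attach_col.
  apply: IH => i hi.
  have /hyp [k hk] : i < size (rcons Gs' G') by rewrite size_rcons ltnS ltnW.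
  exists k; move: hk; rewrite nth_rcons hi.
  by rewrite (set_nth_default H).
have /hyp [k hk] : size Gs' < size (rcons Gs' G') by rewrite size_rcons.
move: hk; rewrite nth_rcons ltnn eqxx; exact: has_dom_chi.
Qed.

Theorem mainTheorem2 (G : sgraph) (Gs : seq sgraph) :
  point_attached G Gs ->
  all connected Gs ->
  (forall i, i < size Gs -> exists k, has_dom_coloring (nth G Gs i) k) ->
  chi_dom G <= \sum_(Gi <- Gs) chi_dom Gi.
Proof.
move=> pa _ hyp; apply: chi_dom_le; exact: main_aux pa hyp.
Qed.
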